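(* Let $\mathcal T$ be an orbital category. If $\mathcal C,\mathcal D$ are unital $\mathcal T$-weak indexing systems, then $\mathfrak R(\mathcal C)\vee\mathfrak R(\mathcal D)=\mathfrak R(\mathcal C\vee\mathcal D)$ (join in $\mathrm{Transf}_{\mathcal T}$ on the left, in weak indexing systems on the right) and $\mathfrak R(\mathcal C)\cap\mathfrak R(\mathcal D)=\mathfrak R(\mathcal C\cap\mathcal D)$.
   Context: For a small category $\mathcal T$, $\mathbb F_{\mathcal T}$ is the full subcategory of $\mathrm{Fun}(\mathcal T^{op},\mathrm{Set})$ on finite coproducts of representables; $\mathcal T$ is orbital if $\mathbb F_{\mathcal T}$ has pullbacks. $\mathbb F_V:=\mathbb F_{\mathcal T,/V}$, $*_V$ terminal; for $U\to V$, $\mathrm{Res}^V_U$ is pullback and $\mathrm{Ind}^V_U$ postcomposition. A full $\mathcal T$-subcategory assigns isomorphism-closed classes $\mathcal C_V\subseteq\mathrm{Ob}\,\mathbb F_V$ stable under restriction. For $S\in\mathbb F_V$ with orbits $U$ and $T_U\in\mathbb F_U$, $\coprod_U^ST_U:=\coprod_U\mathrm{Ind}_U^VT_U$. A $\mathcal T$-weak indexing system is a full $\mathcal T$-subcategory with $\mathcal C_V\neq\emptyset\Rightarrow *_V\in\mathcal C_V$ and closed under $\coprod^S_UT_U$ for $S\in\mathcal C_V$, $T_U\in\mathcal C_U$; these form a lattice under inclusion. It is unital if every $\mathcal C_V$ is nonempty and $S\sqcup S'\in\mathcal C_V\Rightarrow S,S'\in\mathcal C_V$. A transfer system is a wide subcategory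 $R\subseteq\mathcal T$ containing all isomorphisms such that for every commutative square $V'\to V$, $\alpha':V'\to U'$, $\alpha:V\to U$, $U'\to U$ with $\alpha\in R$ and $V'\to V\times_UU'$ a summand inclusion in $\mathbb F_{\mathcal T}$, $\alpha'\in R$; $\mathrm{Transf}_{\mathcal T}$ is their poset under inclusion. For unital $\mathcal C$, $\mathfrak R(\mathcal C)$ is the transfer system of maps $U\to V$ in $\mathcal T$ with $U$ (as a $V$-set) in $\mathcal C_V$. *)

(* Defs.v *)
From mathcomp Require Import all_boot.
Set Implicit Arguments.
Unset Strict Implicit.
Unset Printing Implicit Defensive.

Record Cat := {
  Ob :> Type;
  Hom : Ob -> Ob -> Type;
  idm : forall A, Hom A A;
  comp : forall A B C, Hom B C -> Hom A B -> Hom A C;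
  comp_idl : forall A B (f : Hom A B), comp (idm B) f = f;
  comp_idr : forall A B (f : Hom A B), comp f (idm A) = f;
  comp_assoc : forall A B C D (h : Hom C D) (g : Hom B C) (f : Hom A B),
      comp h (comp g f) = comp (comp h g) f
}.
Arguments Hom {c}.
Arguments idm {c}.
Arguments comp {c A B C}.

Section FT.
Variable T : Cat.

Definition is_iso {A B : T} (f : Hom A B) : Prop :=
  exists g : Hom B A, comp g f = idm A /\ comp f g = idm B.

(** By Yoneda (representables are connected), the full subcategory of
    presheaves on finite coproducts of representables is the free
    finite-coproduct completion: an object is a finite family
    (U_i)_{i in I} of objects of T, a morphism (U_i)_i -> (V_j)_j is a
    choice, for each i, of j and a map U_i -> V_j. *)
Record FObj := { fidx : finType; fob : fidx -> Ob T }.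
Arguments fob : clear implicits.

Definition FHom (X Y : FObj) : Type :=
  forall i : fidx X, { j : fidx Y & Hom (fob X i) (fob Y j) }.

Definition feq {X Y : FObj} (f g : FHom X Y) : Prop := forall i, f i = g i.

Definition fid (X : FObj) : FHom X X := fun i => existT _ i (idm (fob X i)).
Arguments fid : clear implicits.

Definition fcomp {X Y Z : FObj} (g : FHom Y Z) (f : FHom X Y) : FHom X Z :=
  fun i => existT _ (projT1 (g (projT1 (f i))))
                    (comp (projT2 (g (projT1 (f i)))) (projT2 (f i))).

Definition fiso {X Y : FObj} (f : FHom X Y) : Prop :=
  exists g : FHom Y X, feq (fcomp g f) (fid X) /\ feq (fcomp f g) (fid Y).

Definition fsing (U : Ob T) : FObj := {| fidx := unit; fob := fun _ => U |}.
Definition fsingm {U V : Ob T} (f : Hom U V) : FHom (fsing U) (fsing V) :=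
  fun _ => existT (fun j : unit => Hom U V) tt f.

Definition fcoprod (X Y : FObj) : FObj :=
  {| fidx := (fidx X + fidx Y)%type;
     fob := fun k => match k with inl i => fob X i | inr j => fob Y j end |}.
Definition finl (X Y : FObj) : FHom X (fcoprod X Y) :=
  fun i => existT (fun k : fidx (fcoprod X Y) => Hom (fob X i) (fob (fcoprod X Y) k))
                  (inl i) (idm (fob X i)).
Arguments finl : clear implicits.

Definition summand_incl {A B : FObj} (h : FHom A B) : Prop :=
  exists (Y : FObj) (phi : FHom (fcoprod A Y) B),
    fiso phi /\ feq (fcomp phi (finl A Y)) h.

Definition is_pullback {A B C : FObj} (f : FHom A C) (g : FHom B C)
  (P : FObj) (p1 : FHom P A) (p2 : FHom P B) : Prop :=
  feq (fcomp f p1) (fcomp g p2) /\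
  forall (Q : FObj) (q1 : FHom Q A) (q2 : FHom Q B),
    feq (fcomp f q1) (fcomp g q2) ->
    exists u : FHom Q P,
      feq (fcomp p1 u) q1 /\ feq (fcomp p2 u) q2 /\
      forall u' : FHom Q P, feq (fcomp p1 u') q1 -> feq (fcomp p2 u') q2 -> feq u u'.

Definition orbital : Prop :=
  forall (A B C : FObj) (f : FHom A C) (g : FHom B C),
    exists (P : FObj) (p1 : FHom P A) (p2 : FHom P B), is_pullback f g p1 p2.

Record SObj (V : Ob T) := { sobj : FObj; smap : forall i : fidx sobj, Hom (fob sobj i) V }.
Arguments sobj {V}.
Arguments smap {V} s i.

Definition sstr {V : Ob T} (S : SObj V) : FHom (sobj S) (fsing V) :=
  fun i => existT (fun j : unit => Hom (fob (sobj S) i) V) tt (smap S i).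
Arguments sstr {V} S.

Definition over {V : Ob T} (X Y : SObj V) (f : FHom (sobj X) (sobj Y)) : Prop :=
  forall i, comp (smap Y (projT1 (f i))) (projT2 (f i)) = smap X i.
Arguments over {V} X Y f.

Definition siso {V : Ob T} (X Y : SObj V) : Prop :=
  exists (f : FHom (sobj X) (sobj Y)) (g : FHom (sobj Y) (sobj X)),
    over X Y f /\ over Y X g /\
    feq (fcomp g f) (fid (sobj X)) /\ feq (fcomp f g) (fid (sobj Y)).

Definition sterm (V : Ob T) : SObj V :=
  {| sobj := fsing V; smap := fun _ => idm V |}.

Definition sorb {U V : Ob T} (f : Hom U V) : SObj V :=
  {| sobj := fsing U; smap := fun _ => f |}.

Definition scoprod {V : Ob T} (X Y : SObj V) : SObj V :=
  {| sobj := fcoprod (sobj X) (sobj Y);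
     smap := fun k => match k with inl i => smap X i | inr j => smap Y j end |}.

Definition Ind {U V : Ob T} (a : Hom U V) (X : SObj U) : SObj V :=
  {| sobj := sobj X; smap := fun i => comp a (smap X i) |}.

Definition is_Res {U V : Ob T} (a : Hom U V) (X : SObj V) (R : SObj U) : Prop :=
  exists (p1 : FHom (sobj R) (sobj X)),
    is_pullback (sstr X) (fsingm a) p1 (sstr R).

(** coproduct_{U}^{S} T_U := coproduct over the orbits U_i of S of Ind T_i *)
Definition sbigcoprod {V : Ob T} (S : SObj V)
    (TU : forall i : fidx (sobj S), SObj (fob (sobj S) i)) : SObj V :=
  {| sobj := {| fidx := ({i : fidx (sobj S) & fidx (sobj (TU i))} : finType);
                fob := fun k => fob (sobj (TU (projT1 k))) (projT2 k) |};
     smap := fun k => comp (smap S (projT1 k)) (smap (TU (projT1 k)) (projT2 k)) |}.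

Arguments sbigcoprod {V} S TU.

Definition TClass := forall V : Ob T, SObj V -> Prop.

Definition full_Tsubcat (C : TClass) : Prop :=
  (forall V (X Y : SObj V), siso X Y -> C V X -> C V Y) /\
  (forall U V (a : Hom U V) (X : SObj V) (R : SObj U),
      C V X -> is_Res a X R -> C U R).

Definition weak_indexing_system (C : TClass) : Prop :=
  full_Tsubcat C /\
  (forall V, (exists X, C V X) -> C V (sterm V)) /\
  (forall V (S : SObj V) (TU : forall i : fidx (sobj S), SObj (fob (sobj S) i)),
      C V S -> (forall i, C _ (TU i)) -> C V (sbigcoprod S TU)).

Definition unital_wis (C : TClass) : Prop :=
  weak_indexing_system C /\
  (forall V, exists X, C V X) /\
  (forall V (X Y : SObj V), C V (scoprod X Y) -> C V X /\ C V Y).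

Definition wis_join (C D : TClass) : TClass := fun V X =>
  forall E : TClass, weak_indexing_system E ->
    (forall W Y, C W Y -> E W Y) -> (forall W Y, D W Y -> E W Y) -> E V X.

Definition wis_meet (C D : TClass) : TClass := fun V X => C V X /\ D V X.

Definition MorClass := forall U V : Ob T, Hom U V -> Prop.

Definition transfer_system (R : MorClass) : Prop :=
  (forall U V (f : Hom U V), is_iso f -> R U V f) /\
  (forall A B C (f : Hom A B) (g : Hom B C), R A B f -> R B C g -> R A C (comp g f)) /\
  (forall V' V U U' (a : Hom V' V) (al' : Hom V' U') (al : Hom V U) (b : Hom U' U),
      comp al a = comp b al' -> R V U al ->
      forall (P : FObj) (p1 : FHom P (fsing V)) (p2 : FHom P (fsing U')),
        is_pullback (fsingm al) (fsingm b) p1 p2 ->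
      forall h : FHom (fsing V') P,
        feq (fcomp p1 h) (fsingm a) -> feq (fcomp p2 h) (fsingm al') ->
        summand_incl h -> R V' U' al').

Definition tr_join (R1 R2 : MorClass) : MorClass := fun U V f =>
  forall Q : MorClass, transfer_system Q ->
    (forall A B g, R1 A B g -> Q A B g) -> (forall A B g, R2 A B g -> Q A B g) ->
    Q U V f.

Definition Rfrak (C : TClass) : MorClass := fun U V f => C V (sorb f).

End FT.

(* Main.v *)
From Pilot Require Import Defs.
From mathcomp Require Import all_boot.
From Stdlib Require Import Eqdep_dec ClassicalEpsilon.
Import Pilot.Defs.

Set Implicit Arguments.
Unset Strict Implicit.
Unset Printing Implicit Defensive.

Section Work.
Variable T : Cat.

Lemma idx_dec (I : finType) : forall x y : I, {x = y} + {x <> y}.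
Proof. by move=> x y; case: (eqVneq x y) => h; [left|right; apply/eqP]. Qed.

Lemma injT (I : finType) (P : I -> Type) (i : I) (a b : P i) :
  existT P i a = existT P i b -> a = b.
Proof. exact: (inj_pair2_eq_dec _ (@idx_dec I)). Qed.

Lemma injU (P : unit -> Type) (a b : P tt) : existT P tt a = existT P tt b -> a = b.
Proof.
apply: (inj_pair2_eq_dec unit _ P tt a b).
by move=> [] []; left.
Qed.

Definition Pt (X : FObj T) (W : Ob T) := {i : fidx X & Hom W (@fob _ X i)}.

Definition fmap {X Y : FObj T} (f : FHom X Y) {W} (x : Pt X W) : Pt Y W :=
  existT _ (projT1 (f (projT1 x))) (comp (projT2 (f (projT1 x))) (projT2 x)).

Definition ptc {X : FObj T} {W W'} (z : Pt X W) (t : Hom W' W) : Pt X W' :=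
  existT _ (projT1 z) (comp (projT2 z) t).

Definition idpt {X : FObj T} (k : fidx X) : Pt X (@fob _ X k) := existT _ k (idm _).

Lemma fmap_ptc X Y (f : FHom X Y) W W' (z : Pt X W) (t : Hom W' W) :
  fmap f (ptc z t) = ptc (fmap f z) t.
Proof. by rewrite /fmap /ptc /= comp_assoc. Qed.

Lemma fmap_fcomp X Y Z (g : FHom Y Z) (f : FHom X Y) W (z : Pt X W) :
  fmap (fcomp g f) z = fmap g (fmap f z).
Proof. by rewrite /fmap /fcomp /= comp_assoc. Qed.

Lemma ptc_idpt X (k : fidx X) W (t : Hom W (@fob _ X k)) : ptc (idpt k) t = existT _ k t.
Proof. by rewrite /ptc /idpt /= comp_idl. Qed.

Lemma fmap_idpt X Y (f : FHom X Y) (k : fidx X) : fmap f (idpt k) = f k.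
Proof. rewrite /fmap /idpt /=; case: (f k) => j h /=; by rewrite comp_idr. Qed.

Lemma ptc_comp X W W' W'' (z : Pt X W) (t : Hom W' W) (t' : Hom W'' W') :
  ptc (ptc z t) t' = ptc z (comp t t').
Proof. by rewrite /ptc /= comp_assoc. Qed.

Lemma ptc_id X W (z : Pt X W) : ptc z (idm W) = z.
Proof. by case: z => i h; rewrite /ptc /= comp_idr. Qed.

Lemma fmap_feq X Y (f f' : FHom X Y) W (z : Pt X W) : feq f f' -> fmap f z = fmap f' z.
Proof. by move=> e; rewrite /fmap e. Qed.

Lemma fmap_fid X W (z : Pt X W) : fmap (@fid T X) z = z.
Proof. by case: z => i h; rewrite /fmap /fid /= comp_idl. Qed.

Lemma pt_decomp X W (z : Pt X W) : z = ptc (idpt (projT1 z)) (projT2 z).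
Proof. by rewrite ptc_idpt; case: z. Qed.

Definition PBP {A B C : FObj T} (f : FHom A C) (g : FHom B C) (P : FObj T)
  (p1 : FHom P A) (p2 : FHom P B) : Prop :=
  (forall W (z : Pt P W), fmap f (fmap p1 z) = fmap g (fmap p2 z)) /\
  (forall W (x : Pt A W) (y : Pt B W), fmap f x = fmap g y ->
     exists z, fmap p1 z = x /\ fmap p2 z = y) /\
  (forall W (z z' : Pt P W), fmap p1 z = fmap p1 z' -> fmap p2 z = fmap p2 z' -> z = z').

Lemma pb_PBP A B C (f : FHom A C) (g : FHom B C) P p1 p2 :
  is_pullback f g p1 p2 -> @PBP A B C f g P p1 p2.
Proof.
case=> hc hu; split; [|split].
- move=> W z; rewrite -!fmap_fcomp; apply: fmap_feq; exact: hc.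
- move=> W x y e.
  have [u [u1 [u2 _]]] := hu (fsing W) ((fun _ => x) : FHom (fsing W) A) ((fun _ => y) : FHom (fsing W) B) (fun _ => e).
  exists (u tt); split; [exact: (u1 tt) | exact: (u2 tt)].
- move=> W z z' e1 e2.
  pose q1 : FHom (fsing W) A := fun _ => fmap p1 z.
  pose q2 : FHom (fsing W) B := fun _ => fmap p2 z.
  have e : feq (fcomp f q1) (fcomp g q2).
    move=> i; rewrite /fcomp /q1 /q2 -[LHS]/(fmap f (fmap p1 z)) -[RHS]/(fmap g (fmap p2 z)).
    by rewrite -!fmap_fcomp; apply: fmap_feq.
  have [u [u1 [u2 uu]]] := hu (fsing W) _ _ e.
  have h1 := uu ((fun _ => z) : FHom (fsing W) P) (fun _ => erefl) (fun _ => erefl).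
  have h2 := uu ((fun _ => z') : FHom (fsing W) P) (fun _ => esym e1) (fun _ => esym e2).
  by rewrite -(h1 tt) (h2 tt).
Qed.

Lemma PBP_pb A B C (f : FHom A C) (g : FHom B C) P p1 p2 :
  @PBP A B C f g P p1 p2 -> is_pullback f g p1 p2.
Proof.
case=> hc [hf hu]; split.
- move=> i; have := hc _ (idpt i); rewrite !fmap_idpt; exact.
- move=> Q q1 q2 e.
  have ex : forall q, {z : Pt P (@fob _ Q q) | fmap p1 z = q1 q /\ fmap p2 z = q2 q}.
    move=> q; apply: constructive_indefinite_description; apply: hf; exact: e q.
  exists (fun q => sval (ex q)); split; [|split].
  + move=> q; exact: (proj1 (svalP (ex q))).
  + move=> q; exact: (proj2 (svalP (ex q))).
  + move=> u' h1 h2 q; apply: hu.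
    * rewrite (proj1 (svalP (ex q))); exact: (esym (h1 q)).
    * rewrite (proj2 (svalP (ex q))); exact: (esym (h2 q)).
Qed.

Lemma PBP_feq2 A B C (f : FHom A C) (g : FHom B C) P p1 p2 p2' :
  @PBP A B C f g P p1 p2 -> feq p2 p2' -> @PBP A B C f g P p1 p2'.
Proof.
move=> [hc [hf hu]] e; have E : forall W (z : Pt P W), fmap p2 z = fmap p2' z.
  by move=> W z; apply: fmap_feq.
split; [|split].
- by move=> W z; rewrite -E.
- by move=> W x y h; have [z [h1 h2]] := hf W x y h; exists z; rewrite -E.
- by move=> W z z' h1 h2; apply: hu; rewrite ?E.
Qed.

Lemma orbit_rel (X Y : FObj T) (Phi : forall W, Pt Y W -> Pt X W -> Prop)
  (hnat : forall W W' y x (t : Hom W' W), Phi W y x -> Phi W' (ptc y t) (ptc x t))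
  (htot : forall W y, exists x, Phi W y x)
  (hfun : forall W y x x', Phi W y x -> Phi W y x' -> x = x')
  (hinj : forall W y y' x, Phi W y x -> Phi W y' x -> y = y')
  W (h : Pt Y W) (k : fidx X) (phi : Hom W (@fob _ X k)) :
  is_iso phi -> Phi W h (existT _ k phi) -> is_iso (projT2 h).
Proof.
case: h => k' rho /= [phii [e1 e2]] H.
have [[k'' chi] H0] := htot _ (idpt k').
have H1 := hnat _ _ _ _ rho H0; rewrite ptc_idpt in H1.
have E := hfun _ _ _ _ H H1; rewrite /ptc /= in E.
have ek := f_equal (@projT1 _ _) E; simpl in ek; subst k''.
have E' := injT E.
exists (comp phii chi); split.
- by rewrite -comp_assoc -E' e1.
- have H2 := hnat _ _ _ _ (comp phii chi) H.
  have Ex : ptc (existT (fun i => Hom W (@fob _ X i)) k phi) (comp phii chi) = existT _ k chi.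
    by rewrite /ptc /= comp_assoc e2 comp_idl.
  rewrite Ex in H2.
  move=> {H1}; have := hinj _ _ _ _ H2 H0; rewrite /ptc /idpt /=; exact: injT.
Qed.

Definition castH (X : FObj T) (x y : fidx X) (e : x = y) : Hom (@fob _ X x) (@fob _ X y) :=
  match e in _ = y return Hom (@fob _ X x) (@fob _ X y) with erefl => idm _ end.

Lemma castH_refl (X : FObj T) (x : fidx X) (e : x = x) : castH e = idm _.
Proof. by rewrite (eq_irrelevance e erefl). Qed.

Lemma SI_of_iso W (P : FObj T) (h : FHom (fsing W) P) :
  is_iso (projT2 (h tt)) -> summand_incl h.
Proof.
case Eh: (h tt) => [k0 ph] /= [phi [e1 e2]].
pose Y : FObj T := {| fidx := ({x : fidx P | x != k0} : finType); fob := fun x => @fob _ P (val x) |}.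
pose ff : FHom (fcoprod (fsing W) Y) P := fun c =>
  match c as c return {j : fidx P & Hom (@fob _ (fcoprod (fsing W) Y) c) (@fob _ P j)} with
  | inl _ => existT _ k0 ph
  | inr y => existT _ (val y) (idm _) end.
pose gg : FHom P (fcoprod (fsing W) Y) := fun x =>
  match idx_dec x k0 with
  | left e => existT (fun j : fidx (fcoprod (fsing W) Y) => Hom (@fob _ P x) (@fob _ (fcoprod (fsing W) Y) j)) (inl tt) (comp phi (castH e))
  | right e => existT (fun j : fidx (fcoprod (fsing W) Y) => Hom (@fob _ P x) (@fob _ (fcoprod (fsing W) Y) j)) (inr (exist (fun x => x != k0) x (introN eqP e))) (idm _) end.
exists Y, ff; split; [exists gg; split|].
- case=> [[]|[x ex]]; rewrite /fcomp /gg /=.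
  + case: idx_dec => e /=; last by [].
    by rewrite castH_refl comp_idr e1.
  + case: idx_dec => e /=; first by exfalso; move: (ex); rewrite e eqxx.
    by rewrite (bool_irrelevance (introN eqP e) ex) comp_idl.
- move=> x; rewrite /fcomp /gg /=; case: idx_dec => e /=.
  + subst x; by rewrite castH_refl comp_idr e2.
  + by rewrite comp_idl.
- case; rewrite /fcomp Eh /=; by rewrite comp_idr.
Qed.

Lemma iso_of_SI W (P : FObj T) (h : FHom (fsing W) P) :
  summand_incl h -> is_iso (projT2 (h tt)).
Proof.
case=> Y [ff [[gg [e1 e2]] e3]].
rewrite -(e3 tt) /fcomp /=.
case E: (ff (inl tt)) => [k0 ph] /=; rewrite comp_idr.
have := e1 (inl tt); rewrite /fcomp E /=.
case E2: (gg k0) => [j chi] /= H.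
have ej := f_equal (@projT1 _ _) H; simpl in ej; subst j.
have H' := injT H.
have := e2 k0; rewrite /fcomp E2 /= E /= => H3.
exists chi; split; [exact: H' | exact: (injT H3)].
Qed.

Lemma siso_sorb (W W' V : Ob T) (ph : Hom W W') (f : Hom W V) (f' : Hom W' V) :
  is_iso ph -> comp f' ph = f -> siso (sorb f) (sorb f').
Proof.
move=> [phi [e1 e2]] e.
exists (fun _ => existT (fun _ : unit => Hom W W') tt ph).
exists (fun _ => existT (fun _ : unit => Hom W' W) tt phi).
split; [|split; [|split]].
- by move=> i.
- by move=> i /=; rewrite -e -comp_assoc e2 comp_idr.
- by case; rewrite /fcomp /= e1.
- by case; rewrite /fcomp /= e2.
Qed.

Lemma siso_sym (V : Ob T) (X Y : SObj V) : siso X Y -> siso Y X.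
Proof. by case=> f [g [h1 [h2 [h3 h4]]]]; exists g, f. Qed.

Lemma sorb_comp (A B C : Ob T) (f : Hom A B) (g : Hom B C) :
  siso (sbigcoprod (S := sorb g) (fun _ => sorb f)) (sorb (comp g f)).
Proof.
exists (fun _ => existT (fun _ : unit => Hom A A) tt (idm A)).
exists (fun _ => existT (fun _ : {i : unit & unit} => Hom A A) (existT _ tt tt) (idm A)).
split; [|split; [|split]].
- by move=> i; rewrite /= comp_idr.
- by move=> i; rewrite /= comp_idr.
- by case=> [[] []]; rewrite /fcomp /= comp_idl.
- by case; rewrite /fcomp /= comp_idl.
Qed.

Lemma sterm_sorb (W V : Ob T) (ph : Hom W V) : is_iso ph -> siso (sterm V) (sorb ph).
Proof.
move=> [phi [e1 e2]]; apply: (@siso_sorb V W V phi (idm V) ph).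
- by exists ph.
- exact: e2.
Qed.

Lemma orbit_unital (C : TClass T) (V : Ob T) (X : SObj V) (k : fidx (sobj X)) :
  unital_wis C -> C V X -> C _ (sorb (@smap _ _ X k)).
Proof.
move=> [[[hiso _] _] [_ hsum]] hX.
pose B : SObj V := {| sobj := {| fidx := ({x : fidx (sobj X) | x != k} : finType);
                                fob := fun x => @fob _ (sobj X) (val x) |};
                      smap := fun x => smap (val x) |}.
pose Y := scoprod (sorb (smap k)) B.
pose F : FHom (sobj X) (sobj Y) := fun x =>
  match idx_dec x k with
  | left e => existT (fun j : fidx (sobj Y) => Hom (@fob _ (sobj X) x) (@fob _ (sobj Y) j)) (inl tt) (castH e)
  | right e => existT (fun j : fidx (sobj Y) => Hom (@fob _ (sobj X) x) (@fob _ (sobj Y) j)) (inr (exist (fun x => x != k) x (introN eqP e))) (idm _) end.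
pose G : FHom (sobj Y) (sobj X) := fun c =>
  match c as c return {j : fidx (sobj X) & Hom (@fob _ (sobj Y) c) (@fob _ (sobj X) j)} with
  | inl _ => existT _ k (idm _)
  | inr y => existT _ (val y) (idm _) end.
have hY : siso X Y.
  exists F, G; split; [|split; [|split]].
  - move=> x; rewrite /F; case: idx_dec => e /=.
    + by subst x; rewrite castH_refl comp_idr.
    + by rewrite comp_idr.
  - by case=> [[]|[x ex]]; rewrite /= comp_idr.
  - move=> x; rewrite /fcomp /F; case: idx_dec => e /=.
    + by subst x; rewrite castH_refl comp_idl.
    + by rewrite comp_idl.
  - case=> [[]|[x ex]]; rewrite /fcomp /F /=.
    + case: idx_dec => e /=; last by [].
      by rewrite castH_refl comp_idl.
    + case: idx_dec => e /=; first by exfalso; move: (ex); rewrite e eqxx.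
      by rewrite (bool_irrelevance (introN eqP e) ex) comp_idl.
have := hsum _ _ _ (hiso _ _ _ hY hX).
by case.
Qed.

Lemma fmap_sm_comp (U V Z : Ob T) (a : Hom V Z) (b : Hom U V) W (y : Pt (fsing U) W) :
  fmap (fsingm a) (fmap (fsingm b) y) = fmap (fsingm (comp a b)) y.
Proof. by rewrite -fmap_fcomp; apply: fmap_feq; case. Qed.

Lemma over_fmap (V : Ob T) (X Y : SObj V) f : @over _ _ X Y f ->
  forall W (z : Pt (sobj X) W), fmap (sstr (S := Y)) (fmap f z) = fmap (sstr (S := X)) z.
Proof. by move=> ho W [i h]; rewrite /fmap /= comp_assoc ho. Qed.

Lemma Res_exists (HT : orbital T) (U V : Ob T) (a : Hom U V) (X : SObj V) :
  exists R, is_Res a X R.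
Proof.
have [P [p1 [p2 H]]] := HT _ _ _ (sstr (S := X)) (fsingm a).
exists {| sobj := P; smap := fun x => projT2 (p2 x) |}, p1.
apply: PBP_pb; apply: (PBP_feq2 (pb_PBP H)).
by move=> x /=; rewrite /sstr /=; case: (p2 x) => [[] h].
Qed.

Lemma Res_id (V : Ob T) (X : SObj V) : is_Res (idm V) X X.
Proof.
exists (@fid T (sobj X)); apply: PBP_pb; split; [|split].
- by move=> W [i h]; rewrite fmap_fid /fmap /= comp_idl.
- move=> W x [[] y] /= e; exists x; split; first exact: fmap_fid.
  by rewrite e /fmap /= comp_idl.
- by move=> W z z'; rewrite !fmap_fid.
Qed.

Lemma Res_iso (U V : Ob T) (a : Hom U V) (X Y : SObj V) (R : SObj U) :
  siso X Y -> is_Res a Y R -> is_Res a X R.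
Proof.
move=> [f [g [hf [hg [e1 e2]]]]] [p1 /pb_PBP [hc [hx hu]]].
exists (fcomp g p1); apply: PBP_pb; split; [|split].
- by move=> W z; rewrite fmap_fcomp (over_fmap hg) hc.
- move=> W x y e.
  have [z [z1 z2]] := hx W (fmap f x) y (etrans (over_fmap hf x) e).
  exists z; split=> //.
  by rewrite fmap_fcomp z1 -fmap_fcomp (fmap_feq _ e1) fmap_fid.
- move=> W z z'; rewrite !fmap_fcomp => h1 h2; apply: hu => //.
  have E : forall W' (w : Pt (sobj Y) W'), fmap f (fmap g w) = w.
    by move=> W' w; rewrite -fmap_fcomp (fmap_feq _ e2) fmap_fid.
  by have := f_equal (fmap f) h1; rewrite !E.
Qed.

Lemma Res_paste (U' U V : Ob T) (a : Hom U V) (b : Hom U' U) (X : SObj V) (R : SObj U)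
  (R' : SObj U') : is_Res a X R -> is_Res b R R' -> is_Res (comp a b) X R'.
Proof.
move=> [p1 /pb_PBP [hc [hx hu]]] [p1' /pb_PBP [hc' [hx' hu']]].
exists (fcomp p1 p1'); apply: PBP_pb; split; [|split].
- by move=> W z; rewrite fmap_fcomp hc hc' fmap_sm_comp.
- move=> W x y e.
  have [w [w1 w2]] := hx W x (fmap (fsingm b) y) (etrans e (esym (fmap_sm_comp _ _ _))).
  have [z [z1 z2]] := hx' W w y w2.
  by exists z; rewrite fmap_fcomp z1.
- move=> W z z'; rewrite !fmap_fcomp => h1 h2; apply: hu' => //.
  by apply: hu => //; rewrite !hc' h2.
Qed.

Lemma sterm_inj (V : Ob T) W (w w' : Pt (sobj (sterm V)) W) :
  fmap (sstr (S := sterm V)) w = fmap (sstr (S := sterm V)) w' -> w = w'.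
Proof.
case: w => [[] t]; case: w' => [[] t']; rewrite /fmap /= !comp_idl => H.
by rewrite (injT H).
Qed.

Lemma Res_sterm (U V : Ob T) (a : Hom U V) (R : SObj U) :
  is_Res a (sterm V) R -> forall k, is_iso (@smap _ _ R k).
Proof.
move=> [p1 /pb_PBP [hc [hx hu]]] k.
pose x : Pt (sobj (sterm V)) U := existT (fun _ : unit => Hom U V) tt a.
pose y : Pt (fsing U) U := existT (fun _ : unit => Hom U U) tt (idm U).
have e : fmap (sstr (S := sterm V)) x = fmap (fsingm a) y.
  by rewrite /fmap /= comp_idl comp_idr.
have [[k0 rho] [h1 h2]] := hx U x y e.
have e2 : comp (@smap _ _ R k0) rho = idm U.
  move: h2; rewrite /fmap /= => h2; exact: (injT h2).
have E2 : fmap (sstr (S := R)) (ptc (existT _ k0 rho) (@smap _ _ R k)) =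
          fmap (sstr (S := R)) (idpt k).
  by rewrite fmap_ptc h2 fmap_idpt /ptc /= comp_idl.
have E : ptc (existT _ k0 rho) (@smap _ _ R k) = idpt k.
  apply: hu => //; apply: sterm_inj; by rewrite !hc E2.
move: E; rewrite /ptc /idpt /= => E.
have ek := f_equal (@projT1 _ _) E; simpl in ek; subst k0.
exists rho; split; [exact: (injT E) | exact: e2].
Qed.

Lemma iso_id (A : Ob T) : is_iso (idm A).
Proof. by exists (idm A); rewrite comp_idl. Qed.

Lemma Res_orbit (U V : Ob T) (a : Hom U V) (X : SObj V) (R : SObj U) p1 :
  is_pullback (sstr (S := X)) (fsingm a) p1 (sstr (S := R)) ->
  forall k i m, p1 k = existT _ i m ->
  forall P q1 q2, is_pullback (fsingm (@smap _ _ X i)) (fsingm a) (P := P) q1 q2 ->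
  forall h : FHom (fsing (@fob _ (sobj R) k)) P,
    feq (fcomp q1 h) (fsingm m) -> feq (fcomp q2 h) (fsingm (@smap _ _ R k)) ->
    is_iso (projT2 (h tt)).
Proof.
move=> /pb_PBP [hc [hx hu]] k i m Ep P q1 q2 /pb_PBP [hc' [hx' hu']] h hq1 hq2.
pose inc W (w : Pt (fsing (@fob _ (sobj X) i)) W) : Pt (sobj X) W :=
  existT (fun j => Hom W (@fob _ (sobj X) j)) i (projT2 w).
pose Phi W (y : Pt P W) (x : Pt (sobj R) W) :=
  fmap p1 x = inc W (fmap q1 y) /\ fmap (sstr (S := R)) x = fmap q2 y.
apply: (@orbit_rel (sobj R) P Phi _ _ _ _ _ (h tt) k (idm _) (iso_id _)).
- move=> W W' y x t [e1 e2]; split; rewrite !fmap_ptc ?e1 ?e2 //.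
- move=> W y; apply: hx; exact: (hc' W y).
- move=> W y x x' [e1 e2] [e1' e2']; apply: hu; by rewrite ?e1 ?e2 ?e1' ?e2'.
- move=> W y y' x [e1 e2] [e1' e2']; apply: hu'.
  + move: e1'; rewrite e1; case: (fmap q1 y) => [[] t]; case: (fmap q1 y') => [[] t'].
    by rewrite /inc /= => H; rewrite (injT H).
  + by rewrite -e2 -e2'.
- split.
  + have := hq1 tt; rewrite -[fcomp q1 h tt]/(fmap q1 (h tt)) => ->.
    by rewrite -[existT _ k (idm _)]/(idpt k) fmap_idpt Ep.
  + have := hq2 tt; rewrite -[fcomp q2 h tt]/(fmap q2 (h tt)) => ->.
    by rewrite -[existT _ k (idm _)]/(idpt k) fmap_idpt.
Qed.

Lemma Res_bigcoprod (HT : orbital T) (J : TClass T) (hJ : weak_indexing_system J)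
  (U V : Ob T) (a : Hom U V) (S : SObj V) TU (R : SObj U) :
  (forall U' (a' : Hom U' V) R1, is_Res a' S R1 -> forall l, J _ (sorb (@smap _ _ R1 l))) ->
  (forall i U' (a' : Hom U' (@fob _ (sobj S) i)) R2, is_Res a' (TU i) R2 ->
      forall l, J _ (sorb (@smap _ _ R2 l))) ->
  is_Res a (sbigcoprod (S := S) TU) R -> forall k, J _ (sorb (@smap _ _ R k)).
Proof.
move=> hS hT [p1 /pb_PBP [hc [hx hu]]] k.
have [[hJiso _] [_ hJco]] := hJ.
case Ep: (p1 k) => [[i j] m].
have [R1 HR1] := Res_exists HT a S.
have HR1' := HR1; case: HR1' => r1 /pb_PBP [hc1 [hx1 hu1]].
pose x1 : Pt (sobj S) (@fob _ (sobj R) k) :=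
  existT (fun i => Hom _ (@fob _ (sobj S) i)) i (comp (@smap _ _ (TU i) j) m).
pose y1 : Pt (fsing U) (@fob _ (sobj R) k) :=
  existT (fun _ : unit => Hom _ U) tt (@smap _ _ R k).
have e1 : fmap (sstr (S := S)) x1 = fmap (fsingm a) y1.
  have := hc _ (idpt k); rewrite !fmap_idpt Ep /fmap /= => H.
  by rewrite comp_assoc H.
have [[l tau] [z11 z12]] := hx1 _ x1 y1 e1.
have Etau : comp (@smap _ _ R1 l) tau = @smap _ _ R k.
  move: z12; rewrite /fmap /y1 /= => H; exact: (injU H).
move: z11; rewrite /fmap /x1 /=; case Er: (r1 l) => [i' sg] /= z11.
have ei := f_equal (@projT1 _ _) z11; simpl in ei; subst i'.
have Esg := injT z11.
have Ecomm : comp a (@smap _ _ R1 l) = comp (@smap _ _ S i) sg.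
  have := hc1 _ (idpt l); rewrite !fmap_idpt Er /fmap /= => H.
  by move: (injU H) => ->.
have [R2 HR2] := Res_exists HT sg (TU i).
have HR2' := HR2; case: HR2' => r2 /pb_PBP [hc2 [hx2 hu2]].
pose x2 : Pt (sobj (TU i)) (@fob _ (sobj R) k) :=
  existT (fun j => Hom _ (@fob _ (sobj (TU i)) j)) j m.
pose y2 : Pt (fsing (@fob _ (sobj R1) l)) (@fob _ (sobj R) k) :=
  existT (fun _ : unit => Hom _ _) tt tau.
have e2 : fmap (sstr (S := TU i)) x2 = fmap (fsingm sg) y2.
  by rewrite /fmap /= Esg.
have [[k2 rho] [z21 z22]] := hx2 _ x2 y2 e2.
have Erho : comp (@smap _ _ R2 k2) rho = tau.
  move: z22; rewrite /fmap /y2 /= => H; exact: (injU H).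
pose incT W (w : Pt (sobj (TU i)) W) : Pt (sobj (sbigcoprod (S := S) TU)) W :=
  existT (fun c : {i : fidx (sobj S) & fidx (sobj (TU i))} =>
            Hom W (@fob _ (sobj (TU (projT1 c))) (projT2 c)))
         (existT _ i (projT1 w)) (projT2 w).
pose Phi W (y : Pt (sobj R2) W) (x : Pt (sobj R) W) :=
  fmap p1 x = incT W (fmap r2 y) /\ fmap (sstr (S := R)) x = fmap (fsingm (@smap _ _ R1 l)) (fmap (sstr (S := R2)) y).
have rho_iso : is_iso rho.
  apply: (@orbit_rel (sobj R) (sobj R2) Phi _ _ _ _ _ (existT _ k2 rho) k (idm _) (iso_id _)).
  - move=> W W' y x t [f1 f2]; split.
    + by rewrite fmap_ptc f1 (fmap_ptc r2 y t).
    + by rewrite fmap_ptc f2 (fmap_ptc (sstr (S := R2)) y t) (fmap_ptc (fsingm _) _ t).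
  - move=> W y; apply: hx.
    have := hc2 W y.
    case: (fmap r2 y) => [j' t]; case: (fmap (sstr (S := R2)) y) => [[] u].
    rewrite /fmap /incT /= => H0; have H := injU H0.
    by rewrite -comp_assoc H comp_assoc -Ecomm comp_assoc.
  - move=> W y x x' [f1 f2] [f1' f2']; apply: hu; by rewrite ?f1 ?f2 ?f1' ?f2'.
  - move=> W y y' x [f1 f2] [f1' f2'].
    have c1 := hc2 W y; have c2 := hc2 W y'.
    move: f1' f2' c1 c2; rewrite f1 f2.
    case Ey1: (fmap r2 y) => [j1 t1]; case Ey2: (fmap r2 y') => [j2 t2].
    case Ev1: (fmap (sstr (S := R2)) y) => [[] u1]; case Ev2: (fmap (sstr (S := R2)) y') => [[] u2].
    rewrite /incT /fmap /= => H1 H2 c1' c2'.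
    have c1 := injU c1'; have c2 := injU c2'.
    have ej0 := f_equal (@projT1 _ _) H1; simpl in ej0.
    have ej := injT ej0; subst j2.
    have et := injT H1; subst t2.
    have eu : existT (fun l0 => Hom W (@fob _ (sobj R1) l0)) l u1 = existT _ l u2.
      apply: hu1.
      * by rewrite /fmap /= Er -c1 -c2.
      * by move: H2; rewrite /fmap /=.
    have eu' := injT eu; subst u2.
    by apply: hu2; rewrite ?Ey1 ?Ey2 ?Ev1 ?Ev2.
  - split.
    + by rewrite -[existT _ k (idm _)]/(idpt k) fmap_idpt Ep z21.
    + rewrite -[existT _ k (idm _)]/(idpt k) fmap_idpt z22.
      by rewrite /fmap /= Etau.
have J1 : J _ (sorb (@smap _ _ R1 l)) := hS _ _ _ HR1 l.
have J2 : J _ (sorb (@smap _ _ R2 k2)) := hT _ _ _ _ HR2 k2.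
have J2' : J _ (sorb tau).
  apply: (hJiso _ _ _ _ J2); apply: siso_sym; exact: (siso_sorb rho_iso Erho).
have := hJco _ (sorb (@smap _ _ R1 l)) (fun _ => sorb tau) J1 (fun _ => J2').
move=> /(hJiso _ _ _ (sorb_comp tau (@smap _ _ R1 l))).
by rewrite Etau.
Qed.

Lemma wis_join_wis (C D : TClass T) : weak_indexing_system (wis_join C D).
Proof.
split; [split|split].
- move=> V X Y hXY hX E hE hC hD; have [[hi _] _] := hE; exact: (hi _ _ _ hXY (hX E hE hC hD)).
- move=> U V a X R hX hR E hE hC hD; have [[_ hr] _] := hE; exact: (hr _ _ _ _ _ (hX E hE hC hD) hR).
- move=> V [X hX] E hE hC hD; have [_ [ht _]] := hE; apply: ht; exists X; exact: hX E hE hC hD.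
- move=> V S TU hS hTU E hE hC hD; have [_ [_ hb]] := hE.
  apply: hb; first exact: hS E hE hC hD.
  by move=> i; exact: hTU i E hE hC hD.
Qed.

Lemma tr_join_ts (R1 R2 : MorClass T) : transfer_system (tr_join R1 R2).
Proof.
split; [|split].
- move=> U V f hf Q [hi _] _ _; exact: hi.
- move=> A B C f g hf hg Q hQ h1 h2; have [_ [hc _]] := hQ; apply: hc; [exact: hf Q hQ h1 h2|exact: hg Q hQ h1 h2].
- move=> V' V U U' a al' al b hsq hal P p1 p2 hpb h hh1 hh2 hs Q hQ h1 h2.
  have [_ [_ hr]] := hQ; exact: (hr _ _ _ _ _ _ _ _ hsq (hal Q hQ h1 h2) _ _ _ hpb h hh1 hh2 hs).
Qed.

Lemma siso_orbit (V : Ob T) (X Y : SObj V) : siso X Y ->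
  forall y, exists x (ps : Hom (@fob _ (sobj Y) y) (@fob _ (sobj X) x)),
    is_iso ps /\ comp (@smap _ _ X x) ps = @smap _ _ Y y.
Proof.
move=> [f [g [hf [hg [e1 e2]]]]] y.
have ov := hg y.
case Eg: (g y) ov => [x ps] /= ov.
exists x, ps; split=> //.
have := e2 y; rewrite /fcomp Eg /=.
case Ef: (f x) => [y' ph] /= H.
have ey := f_equal (@projT1 _ _) H; simpl in ey; subst y'.
have H' := injT H.
have := e1 x; rewrite /fcomp Ef /= Eg /= => H2.
exists ph; split; [exact: H'|exact: (injT H2)].
Qed.

Section Main.
Unset Implicit Arguments.
Variable HT : orbital T.
Variables C D : TClass T.
Hypothesis hC : unital_wis C.
Hypothesis hD : unital_wis D.

Local Notation J := (fun V X => @wis_join T C D V X).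
Local Notation Q := (fun U V f => @tr_join T (Rfrak C) (Rfrak D) U V f).

Lemma CJ (V : Ob T) (X : SObj V) : C V X -> J V X.
Proof. by move=> h E _ hc _; exact: hc. Qed.
Lemma DJ (V : Ob T) (X : SObj V) : D V X -> J V X.
Proof. by move=> h E _ _ hd; exact: hd. Qed.

Lemma J_wis : weak_indexing_system J.
Proof. exact: wis_join_wis. Qed.

Lemma J_term (V : Ob T) : J V (sterm V).
Proof.
have [_ [ht _]] := J_wis; apply: ht.
have [_ [hne _]] := hC; have [X hX] := hne V; exists X; exact: CJ.
Qed.

Definition Ep (V : Ob T) (X : SObj V) : Prop :=
  forall U' (a : Hom U' V) R, is_Res a X R -> forall k, J _ (sorb (@smap _ _ R k)).

Lemma Ep_unital (C' : TClass T) : unital_wis C' -> (forall V X, C' V X -> J V X) ->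
  forall V X, C' V X -> Ep V X.
Proof.
move=> hu hinc V X hX U' a R HR k; apply: hinc.
have [[[_ hr] _] _] := hu.
exact: (orbit_unital k hu (hr _ _ _ _ _ hX HR)).
Qed.

Lemma Ep_wis : weak_indexing_system Ep.
Proof.
have [[hJi hJr] [hJt hJb]] := J_wis.
split; [split|split].
- move=> V X Y hXY hX U' a R HR; apply: hX; exact: (Res_iso hXY HR).
- move=> U V a X R hX hR U'' b R' HR'; exact: (hX _ _ _ (Res_paste hR HR')).
- move=> V _ U' a R HR k; apply: (hJi _ _ _ _ (J_term U')).
  exact: sterm_sorb (Res_sterm HR k).
- move=> V S TU hS hTU U' a R HR k.
  exact: (Res_bigcoprod HT J_wis hS (fun i => hTU i) HR).
Qed.

Lemma J_orbit (V : Ob T) (X : SObj V) k : J V X -> J _ (sorb (@smap _ _ X k)).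
Proof.
move=> hX; have hE : Ep V X.
  apply: hX; [exact: Ep_wis | exact: Ep_unital C hC CJ | exact: Ep_unital D hD DJ].
exact: hE _ _ _ (Res_id X) k.
Qed.

Lemma RJ_ts : transfer_system (Rfrak J).
Proof.
have [[hJi hJr] [hJt hJb]] := J_wis.
split; [|split].
- move=> U V f hf; rewrite /Rfrak; apply: (hJi _ _ _ _ (J_term V)); exact: sterm_sorb.
- move=> A B C0 f g hf hg; rewrite /Rfrak.
  have := hJb _ (sorb g) (fun _ => sorb f) hg (fun _ => hf).
  exact: (hJi _ _ _ (sorb_comp f g)).
- move=> V' V0 U U' a al' al b Hsq HJ P p1 p2 Hpb h h1 h2 hs.
  pose Ps : SObj U' := {| sobj := P; smap := fun x => projT2 (p2 x) |}.
  have HRes : is_Res b (sorb al) Ps.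
    exists p1; apply: PBP_pb; apply: (PBP_feq2 (pb_PBP Hpb)).
    by move=> x; rewrite /sstr /=; case: (p2 x) => [[] s].
  have JPs : J U' Ps := hJr _ _ _ _ _ HJ HRes.
  have hiso := iso_of_SI hs.
  have := h2 tt; rewrite /fcomp /=.
  case Eh: (h tt) hiso => [k0 ph] /= hiso.
  have Jk := J_orbit U' Ps k0 JPs.
  move=> H; have H' : comp (@smap _ _ Ps k0) ph = al'.
    move: H; rewrite /Ps /=; case: (p2 k0) => [[] s] /= H; exact: (injU H).
  rewrite /Rfrak; apply: (hJi _ _ _ _ Jk); apply: siso_sym; exact: (siso_sorb hiso H').
Qed.

Lemma Q_ts : transfer_system Q.
Proof. exact: tr_join_ts. Qed.

Definition Eq (V : Ob T) (X : SObj V) : Prop := forall k, Q _ _ (@smap _ _ X k).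

Lemma Eq_unital (C' : TClass T) : unital_wis C' -> (forall U V f, Rfrak C' f -> Q U V f) ->
  forall V X, C' V X -> Eq V X.
Proof. by move=> hu hinc V X hX k; apply: hinc; exact: orbit_unital. Qed.

Lemma Eq_wis : weak_indexing_system Eq.
Proof.
have [hQi [hQc hQr]] := Q_ts.
split; [split|split].
- move=> V X Y hXY hX y.
  have [x [ps [hps <-]]] := siso_orbit hXY y.
  apply: hQc; [exact: hQi | exact: hX].
- move=> U V a X R hX [p1 Hpb] k.
  have [hc [hx hu]] := pb_PBP Hpb.
  case Ep1: (p1 k) => [i m].
  have Hsq : comp (@smap _ _ X i) m = comp a (@smap _ _ R k).
    have := hc _ (idpt k); rewrite !fmap_idpt Ep1 /fmap /= => H; exact: (injU H).
  have [P [q1 [q2 Hpb2]]] := HT _ _ _ (fsingm (@smap _ _ X i)) (fsingm a).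
  have Hpb2' := Hpb2; case: Hpb2' => hc2 hu2.
  have [u [u1 [u2 _]]] := hu2 _ (fsingm m) (fsingm (@smap _ _ R k))
     (fun t => match t with tt => f_equal (fun h => existT (fun _ : unit => _) tt h) Hsq end).
  apply: (hQr _ _ _ _ m _ _ a Hsq (hX i) _ _ _ Hpb2 u u1 u2).
  apply: SI_of_iso; exact: (Res_orbit Hpb Ep1 Hpb2 u1 u2).
- move=> V _ k; exact: hQi (iso_id V).
- move=> V S TU hS hTU [i j]; apply: hQc; [exact: hTU|exact: hS].
Qed.

End Main.

End Work.

Theorem mainTheorem16 (T : Cat) (HT : orbital T) (C D : TClass T) :
  unital_wis C -> unital_wis D ->
  (forall (U V : Ob T) (f : Hom U V),
      tr_join (Rfrak C) (Rfrak D) f <-> Rfrak (wis_join C D) f) /\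
  (forall (U V : Ob T) (f : Hom U V),
      (Rfrak C f /\ Rfrak D f) <-> Rfrak (wis_meet C D) f).
Proof.
move=> hC hD; split; last by move=> U V f; split.
move=> U V f; split.
- move=> H; apply: H.
  + exact: RJ_ts.
  + by move=> A B g hg; apply: CJ.
  + by move=> A B g hg; apply: DJ.
- move=> H.
  have hE : Eq T C D _ (sorb f).
    apply: H.
    + exact: Eq_wis.
    + apply: Eq_unital => // A B g hg Q' hQ' h1 h2; exact: h1.
    + apply: Eq_unital => // A B g hg Q' hQ' h1 h2; exact: h2.
  exact: hE tt.
Qed.
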